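(* Let $G=(V,E)$ be a graph and $f:\{0,1\}^V\to\mathbb{R}_{\ge0}$ a nonnegative submodular function (viewed as a function of binary assignments $\overline{X}=\{X_v\}_{v\in V}$) which is a local utility function. Given a legal $c$-coloring of $G$, there exist a randomized distributed algorithm outputting $\overline{X}$ with $E[f(\overline{X})]\ge\frac12\max_{\overline{Y}}f(\overline{Y})$, and a deterministic distributed algorithm outputting $\overline{X}$ with $f(\overline{X})\ge\frac13\max_{\overline{Y}}f(\overline{Y})$, both running in $O(c)$ communication rounds in the CONGEST model.
   Context: Submodular: $f(S)+f(T)\ge f(S\cup T)+f(S\cap T)$ for all $S,T\subseteq V$, identifying a binary assignment with the set of vertices assigned 1. $L_v[\overline{X}]$ is the restriction of an assignment to the neighbours of $v$, passed together with the 1-hop neighbourhood of $v$. $f$ is a local utility function if for every $v$ there is $g_v$ with $f(\overline{X}\cup\{X_v=\alpha\})-f(\overline{X}\cup\{X_v=\alpha'\})=g_v(L_v[\overline{X}],\alpha,\alpha')$ for all $\overline{X}$ and $\alpha,\alpha'\in\{0,1\}$. CONGEST: synchronous rounds, $O(\log n)$-bit messages per edge per round. A legal coloring gives adjacent vertices different colors. *)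

(* Defs.v *)
(* A model of synchronous CONGEST algorithms with randomness
   given by finitely supported distributions with real-valued weights. *)
From HB Require Import structures.
From mathcomp Require Import all_boot all_order all_algebra.
Set Implicit Arguments. Unset Strict Implicit. Unset Printing Implicit Defensive.
Import Order.TTheory GRing.Theory Num.Theory.
Local Open Scope ring_scope.

(* What a node knows initially: n, its id, the number of colours c, its colour,
   the ids of its neighbours, and an oracle for its local marginal g_v:
   given the values of its neighbours (indexed by neighbour id) and alpha, alpha',
   it returns f(X u {X_v=alpha}) - f(X u {X_v=alpha'}). *)
Record LocalInput (R : Type) := LI {
  li_n : nat; li_id : nat; li_c : nat; li_color : nat;
  li_nbrs : seq nat;
  li_g : (nat -> bool) -> bool -> bool -> R }.

(* A distributed algorithm (uniform: independent of the graph). *)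
Record Alg (R : Type) := MkAlg {
  St : Type;
  a_init : LocalInput R -> St;
  a_send : St -> nat -> seq bool;                 (* message to neighbour with given id *)
  a_step : St -> (nat -> seq bool) -> seq (R * St); (* distribution of next states given inbox *)
  a_out : St -> bool;
  a_rounds : nat -> nat -> nat }.                  (* number of rounds, as function of n and c *)

Arguments a_init {R} a.
Arguments a_send {R} a.
Arguments a_step {R} a.
Arguments a_out {R} a.
Arguments a_rounds {R} a.

Section Model.
Variable R : realFieldType.

Definition alg_valid (A : Alg R) : Prop :=
  forall s m, all (fun ps => 0 <= ps.1) (a_step A s m) &&
              (\sum_(ps <- a_step A s m) ps.1 == 1).

Definition alg_det (A : Alg R) : Prop :=
  forall s m, exists s', a_step A s m = [:: (1, s')].

Variables (V : finType) (adj : rel V).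

Definition simple_graph : Prop := symmetric adj /\ irreflexive adj.

Definition nbhd (v : V) : {set V} := [set u | adj v u].

Definition setv (X : {set V}) (v : V) (a : bool) : {set V} :=
  if a then v |: X else X :\ v.

Definition submodular (f : {set V} -> R) : Prop :=
  forall S T, f (S :|: T) + f (S :&: T) <= f S + f T.

Definition nonneg (f : {set V} -> R) : Prop := forall S, 0 <= f S.

Definition local_utility (f : {set V} -> R) : Prop :=
  forall v, exists g : {set V} -> bool -> bool -> R,
    forall X a a', f (setv X v a) - f (setv X v a') = g (X :&: nbhd v) a a'.

Definition legal_coloring (c : nat) (col : V -> nat) : Prop :=
  (forall v, col v < c)%N /\ forall u v, adj u v -> col u != col v.

Definition fmax (f : {set V} -> R) : R := \big[Num.max/0]_(Y : {set V}) f Y.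

Variables (id : V -> nat) (c : nat) (col : V -> nat) (f : {set V} -> R).

Definition ids_ok : Prop := injective id /\ forall v, (id v < #|V|)%N.

Definition local_oracle (v : V) : (nat -> bool) -> bool -> bool -> R :=
  fun L a a' => let X := [set u | adj v u && L (id u)] in
                f (setv X v a) - f (setv X v a').

Definition local_input (v : V) : LocalInput R :=
  LI #|V| (id v) c (col v) [seq id u | u <- enum V & adj v u] (local_oracle v).

Variable A : Alg R.

Definition config := V -> St A.

Definition init_config : config := fun v => a_init A (local_input v).

Definition inbox (s : config) (v : V) : nat -> seq bool := fun i =>
  match [pick u | adj v u && (id u == i)] with
  | Some u => a_send A (s u) (id v)
  | None => [::]
  end.

Definition update (t : config) (v : V) (x : St A) : config :=
  fun u => if u == v then x else t u.

Definition round (s : config) : seq (R * config) :=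
  foldl (fun D v => flatten (map (fun wt =>
           map (fun px => (wt.1 * px.1, update wt.2 v px.2)) (a_step A (s v) (inbox s v))) D))
        [:: (1, s)] (enum V).

Definition run (k : nat) : seq (R * config) :=
  iter k (fun D => flatten (map (fun wt =>
            map (fun ws => (wt.1 * ws.1, ws.2)) (round wt.2)) D))
       [:: (1, init_config)].

Definition nrounds : nat := a_rounds A #|V| c.

Definition output (s : config) : {set V} := [set v | a_out A (s v)].

Definition expected_value : R :=
  \sum_(wt <- run nrounds) wt.1 * f (output wt.2).

Definition congest (B : nat) : Prop :=
  forall k, (k < nrounds)%N ->
    all (fun wt => [forall v, forall u,
           adj v u ==> (size (a_send A (wt.2 v) (id u)) <= B * (up_log 2 #|V|).+1)%N]) (run k).

End Model.

(* Main.v *)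
Require Import Defs.
From mathcomp Require Import all_boot all_order all_algebra.
From mathcomp Require Import ring lra.
Import Order.TTheory GRing.Theory Num.Theory.
Local Open Scope ring_scope.

Section Algo.
Variable R : realFieldType.
Definition stT := (LocalInput R * nat * option bool)%type.

Definition dstep (dec : R -> R -> seq (R * bool)) (s : stT) (m : nat -> seq bool)
  : seq (R * stT) :=
  let: (li, k, st) := s in
  if k == li_color li then
    [seq (pb.1, (li, k.+1, Some pb.2)) |
       pb <- dec (li_g li (fun i => head false (m i)) true false)
                 (li_g li (fun i => ~~ nth false (m i) 1) false true)]
  else [:: (1, (li, k.+1, st))].

Definition mkAlg dec : Alg R :=
  @MkAlg R stT (fun li => (li, 0%N, None))
    (fun s _ => [:: s.2 == Some true; s.2 == Some false])
    (dstep dec) (fun s => s.2 == Some true) (fun _ c => c).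

Definition ddec (a b : R) : seq (R * bool) := [:: (1, b <= a)].
Definition rdec (a b : R) : seq (R * bool) :=
  if a <= 0 then [:: (1, false)] else if b <= 0 then [:: (1, true)]
  else [:: (a / (a + b), true); (b / (a + b), false)].
End Algo.
Arguments rdec {R}. Arguments ddec {R}. Arguments dstep {R}. Arguments mkAlg {R}.

Section Dist.
Variable R : realFieldType.
Definition Ex {T} (D : seq (R * T)) (h : T -> R) : R := \sum_(wt <- D) wt.1 * h wt.2.
Definition bindf {T S U} (D : seq (R*T)) (K : T -> seq (R*S)) (g : T -> S -> U)
  : seq (R*U) :=
  flatten (map (fun wt => map (fun px => (wt.1 * px.1, g wt.2 px.2)) (K wt.2)) D).
Definition supp {T} (D : seq (R*T)) (P : R -> T -> Prop) :=
  forall w t, List.In (w,t) D -> P w t.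

Lemma In_cat {A} (x : A) s1 s2 : List.In x (s1 ++ s2) -> List.In x s1 \/ List.In x s2.
Proof. elim: s1 => [|y s IH] /=; first by right. case=> [->|/IH [H|H]]; tauto. Qed.

Lemma In_map {A B} (g : A -> B) s y : List.In y (map g s) -> exists x, List.In x s /\ y = g x.
Proof.
elim: s => [|x s IH] //= [<-|/IH [z [H1 H2]]]; [by exists x; auto | by exists z; auto].
Qed.

Lemma supp_bindf {T S U} (D : seq (R*T)) (K : T -> seq (R*S)) (g : T -> S -> U) P Q :
  supp D P -> (forall w t, P w t -> forall w' x, List.In (w',x) (K t) -> Q (w*w') (g t x)) ->
  supp (bindf D K g) Q.
Proof.
move=> HD HK; rewrite /bindf; elim: D HD => [|[w t] D IH] HD w0 t0 //= Hin.
case: (In_cat _ _ _ Hin).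
- move=> Hm; case: (In_map _ _ _ Hm) => [[w' x] [Hin' [-> ->]]] /=. apply: (HK w t) => //. apply: HD; by left.
- apply: IH => w1 t1 H; apply: HD; by right.
Qed.

Lemma Ex_bindf {T S U} (D : seq (R*T)) (K : T -> seq (R*S)) (g : T -> S -> U) h :
  Ex (bindf D K g) h = \sum_(wt <- D) wt.1 * \sum_(px <- K wt.2) px.1 * h (g wt.2 px.2).
Proof.
rewrite /Ex /bindf; elim: D => [|wt D IH] /=; first by rewrite !big_nil.
rewrite big_cat big_cons IH big_map; congr (_ + _).
rewrite mulr_sumr; apply: eq_bigr => px _ /=; by rewrite mulrA.
Qed.

Lemma Ex_bind_ge {T S} (D : seq (R*T)) (K : T -> seq (R*S)) (g : T -> S -> T) h :
  supp D (fun w t => 0 <= w /\ h t <= \sum_(px <- K t) px.1 * h (g t px.2)) ->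
  Ex D h <= Ex (bindf D K g) h.
Proof.
move=> HD; rewrite Ex_bindf /Ex; elim: D HD => [|[w t] D IH] HD; first by rewrite !big_nil.
rewrite !big_cons /=; apply: lerD.
- have [H1 H2] := HD w t (or_introl erefl). by apply: ler_wpM2l.
- apply: IH => w1 t1 H; apply: HD; by right.
Qed.

Lemma Ex_le {T} (D : seq (R*T)) h1 h2 :
  supp D (fun w t => 0 <= w /\ h1 t <= h2 t) -> Ex D h1 <= Ex D h2.
Proof.
rewrite /Ex; elim: D => [|[w t] D IH] HD; first by rewrite !big_nil.
rewrite !big_cons /=; apply: lerD.
- have [H1 H2] := HD w t (or_introl erefl). by apply: ler_wpM2l.
- apply: IH => w1 t1 H; apply: HD; by right.
Qed.

Lemma foldl_inv {V : eqType} {T} (F : seq (R*T) -> V -> seq (R*T)) (I : seq V -> R -> T -> Prop) :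
  (forall v l D, uniq (v::l) -> supp D (I (v::l)) -> supp (F D v) (I l)) ->
  forall l D, uniq l -> supp D (I l) -> supp (foldl F D l) (I [::]).
Proof.
move=> HF; elim=> [|v l IH] D //= Hu HD. apply: IH; first by case/andP: Hu.
exact: HF.
Qed.

Lemma foldl_Ex {V : eqType} {T} (F : seq (R*T) -> V -> seq (R*T)) (I : seq V -> R -> T -> Prop) h :
  (forall v l D, uniq (v::l) -> supp D (I (v::l)) -> supp (F D v) (I l)) ->
  (forall v l D, uniq (v::l) -> supp D (I (v::l)) -> Ex D h <= Ex (F D v) h) ->
  forall l D, uniq l -> supp D (I l) -> Ex D h <= Ex (foldl F D l) h.
Proof.
move=> HF HE; elim=> [|v l IH] D //= Hu HD. apply: le_trans (HE v l D Hu HD) _.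
apply: IH; first by case/andP: Hu. exact: HF.
Qed.
End Dist.
Arguments Ex {R T}. Arguments bindf {R T S U}. Arguments supp {R T}.
Arguments supp_bindf {R T S U D K g P Q}. Arguments Ex_bindf {R T S U}.
Arguments Ex_bind_ge {R T S D K g h}. Arguments Ex_le {R T D h1 h2}.
Arguments foldl_inv {R V T}. Arguments foldl_Ex {R V T}.

Section Sets.
Variable R : realFieldType.
Variables (V : finType) (f : {set V} -> R).
Hypothesis Hsub : submodular f.

Definition Pot (k : R) (O X Y : {set V}) := f X + f Y + k * f ((O :|: X) :&: Y).

Lemma submod_marg (A B : {set V}) v : A \subset B -> v \notin B ->
  f (v |: B) - f B <= f (v |: A) - f A.
Proof.
move=> HAB HvB. have H := Hsub (v |: A) B.
have E1 : (v |: A) :|: B = v |: B.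
  apply/setP=> u; rewrite !inE; case Hu: (u \in A); rewrite ?orbT ?orbF //=.
  by rewrite (subsetP HAB u Hu) orbT.
have E2 : (v |: A) :&: B = A.
  apply/setP=> u; rewrite !inE; case: (eqVneq u v) => [->|_] /=.
  - rewrite (negbTE HvB); by apply/esym/negP => /(subsetP HAB); rewrite (negbTE HvB).
  - case Hu: (u \in A) => //=; by rewrite (subsetP HAB u Hu).
rewrite E1 E2 in H. lra.
Qed.

Lemma setD1_id (X : {set V}) v : v \notin X -> X :\ v = X.
Proof. move=> H; apply/setP=> u; rewrite !inE; case: (eqVneq u v) => [->|] //=. by rewrite (negbTE H). Qed.
Lemma setU1_id (X : {set V}) v : v \in X -> v |: X = X.
Proof. move=> H; apply/setP=> u; rewrite !inE; case: (eqVneq u v) => [->|] //=. Qed.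

Arguments setD1_id {X v}. Arguments setU1_id {X v}. Arguments submod_marg {A B v}.
Section Step.
Variables (O X Y : {set V}) (v : V).
Hypotheses (HXY : X \subset Y) (HvX : v \notin X) (HvY : v \in Y).
Let W := (O :|: X) :&: Y.
Let a := f (v |: X) - f X.
Let b := f (Y :\ v) - f Y.

Lemma potT k : Pot k O (setv X v true) (setv Y v true) = f (v |: X) + f Y + k * f (v |: W).
Proof.
rewrite /Pot /setv (setU1_id HvY); congr (_ + _ + k * f _).
apply/setP=> u; rewrite /W !inE; case: (eqVneq u v) => [->|] //=; by rewrite HvY orbT.
Qed.

Lemma potF k : Pot k O (setv X v false) (setv Y v false) = f X + f (Y :\ v) + k * f (W :\ v).
Proof.
rewrite /Pot /setv (setD1_id HvX); congr (_ + _ + k * f _).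
apply/setP=> u; rewrite /W !inE; case: (eqVneq u v) => [->|] /=; rewrite ?andbF ?andbT ?andbA //.
Qed.

Lemma XsubYv : X \subset Y :\ v.
Proof. apply/subsetP=> u Hu; rewrite !inE (subsetP HXY u Hu) andbT. by apply/eqP=> E; move: HvX; rewrite -E Hu. Qed.

Lemma Fab : 0 <= a + b.
Proof.
have H := submod_marg XsubYv (v:=v). rewrite !inE eqxx /= in H.
have := H isT. rewrite setD1K //. rewrite /a /b. lra.
Qed.

Lemma F1 : v \notin W -> - b <= f (v |: W) - f W.
Proof.
move=> HvW. have HW : W \subset Y :\ v.
  apply/subsetP=> u Hu; rewrite !inE. have: u \in Y by move: Hu; rewrite /W !inE => /andP[].
  move=> ->; rewrite andbT; by apply/eqP=> E; rewrite -E Hu in HvW.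
have := submod_marg HW (v:=v). rewrite !inE eqxx /= setD1K // => H. have := H isT. rewrite /b. lra.
Qed.

Lemma F2 : v \in W -> f W - f (W :\ v) <= a.
Proof.
move=> HvW. have HX : X \subset W :\ v.
  apply/subsetP=> u Hu; rewrite /W !inE Hu orbT (subsetP HXY u Hu) andbT.
  rewrite ?andbT; apply/negP => /eqP E; move: HvX; by rewrite -E Hu.
have := submod_marg HX (v:=v). rewrite !inE eqxx /= setD1K // => H. have := H isT. rewrite /a. lra.
Qed.

Lemma det_step : Pot 1 O X Y <= Pot 1 O (setv X v (b <= a)) (setv Y v (b <= a)).
Proof.
have Hab := Fab.
case: (boolP (b <= a)) => Hba.
- rewrite potT /Pot !mul1r. fold W. case: (boolP (v \in W)) => HvW.
  + rewrite (setU1_id HvW). rewrite /a /b in Hab Hba *. lra.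
  + have := F1 HvW. rewrite /a /b in Hab Hba *. lra.
- rewrite potF /Pot !mul1r. fold W. rewrite -ltNge in Hba. case: (boolP (v \in W)) => HvW.
  + have := F2 HvW. rewrite /a /b in Hab Hba *. lra.
  + rewrite (setD1_id HvW). rewrite /a /b in Hab Hba *. lra.
Qed.

Lemma rand_step : Pot 2 O X Y <=
  \sum_(pb <- rdec a b) pb.1 * Pot 2 O (setv X v pb.2) (setv Y v pb.2).
Proof.
have Hab := Fab.
have P1 : Pot 2 O X Y <= Pot 2 O (setv X v true) (setv Y v true) - a + 2 * b * (if v \in W then 0 else 1).
  rewrite potT /Pot. fold W. case: (boolP (v \in W)) => HvW /=.
  + rewrite (setU1_id HvW) /a; lra.
  + have := F1 HvW. rewrite /a /b in Hab *. lra.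
have P2 : Pot 2 O X Y <= Pot 2 O (setv X v false) (setv Y v false) - b + 2 * a * (if v \in W then 1 else 0).
  rewrite potF /Pot. fold W. case: (boolP (v \in W)) => HvW /=.
  + have := F2 HvW. rewrite /a /b in Hab *. lra.
  + rewrite (setD1_id HvW) /b; lra.
rewrite /rdec. case: ifP => Ha.
  rewrite big_cons big_nil /= mul1r addr0. case: (v \in W) P2 => /=; rewrite /a /b in Ha Hab * ; lra.
case: ifP => Hb.
  rewrite big_cons big_nil /= mul1r addr0. case: (v \in W) P1 => /=; rewrite /a /b in Ha Hb Hab *; lra.
rewrite !big_cons big_nil /= addr0.
move: Ha Hb => /negbT; rewrite -ltNge => Ha /negbT; rewrite -ltNge => Hb.
set PT := Pot 2 O (setv X v true) (setv Y v true) in P1 *.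
set PF := Pot 2 O (setv X v false) (setv Y v false) in P2 *.
set P0 := Pot 2 O X Y in P1 P2 *.
have Hs : 0 < a + b by lra.
have key : P0 * (a + b) <= a * PT + b * PF.
  have Ha0 : 0 <= a by lra. have Hb0 : 0 <= b by lra.
  have H3 : 0 <= (a - b) * (a - b) by rewrite -expr2 sqr_ge0.
  case: (v \in W) P1 P2 => /= P1 P2.
  + have H1 : 0 <= a * (PT - a - P0) by apply: mulr_ge0; lra.
    have H2 : 0 <= b * (PF - b + 2 * a - P0) by apply: mulr_ge0; lra.
    nra.
  + have H1 : 0 <= a * (PT - a + 2 * b - P0) by apply: mulr_ge0; lra.
    have H2 : 0 <= b * (PF - b - P0) by apply: mulr_ge0; lra.
    nra.
have E : a / (a + b) * PT + b / (a + b) * PF = (a * PT + b * PF) / (a + b).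
  by rewrite [RHS]mulrDl; congr (_ + _); rewrite mulrAC.
rewrite E ler_pdivlMr //.
Qed.
End Step.
End Sets.
Arguments Pot {R V}.
Arguments setD1_id {V X v}. Arguments setU1_id {V X v}.

Section Model.
Variable R : realFieldType.
Variable dec : R -> R -> seq (R * bool).
Variables (V : finType) (adj : rel V) (id : V -> nat) (c : nat) (col : V -> nat)
  (f : {set V} -> R).
Hypotheses (Hg : simple_graph adj) (Hid : ids_ok id) (Hcol : legal_coloring adj c col)
  (Hloc : local_utility adj f).

Local Notation A := (mkAlg dec).
Local Notation cfg := (config V A).
Local Notation li u := (local_input adj id c col f u).

Definition Xs (t : cfg) : {set V} := [set u | (t u).2 == Some true].
Definition Ys (t : cfg) : {set V} := [set u | (t u).2 != Some false].

Definition Good (k : nat) (s : cfg) := forall u,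
  (s u).1 = (li u, k) /\ (((s u).2 == None) = (k <= col u)%N).

Definition Intm (s : cfg) (k : nat) (l : seq V) (t : cfg) := forall u,
  (u \in l -> t u = s u) /\
  (u \notin l -> (t u).1 = (li u, k.+1) /\ (col u != k -> (t u).2 = (s u).2) /\
                 (col u == k -> (t u).2 != None)).

Definition aX (t : cfg) v := f (v |: Xs t) - f (Xs t).
Definition bY (t : cfg) v := f (Ys t :\ v) - f (Ys t).

Lemma inbox_nbr (s : cfg) v u : adj v u ->
  inbox adj id s v (id u) = [:: (s u).2 == Some true; (s u).2 == Some false].
Proof.
move=> Hvu; rewrite /inbox; case: pickP => [u' /andP[_ /eqP /(proj1 Hid) ->] // | /(_ u)].
by rewrite Hvu eqxx.
Qed.

Lemma oracle_eq v L (Z : {set V}) : (forall u, adj v u -> L (id u) = (u \in Z)) ->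
  forall a a', local_oracle adj id f v L a a' = f (setv Z v a) - f (setv Z v a').
Proof.
move=> HL a a'; have [g Hg'] := Hloc v; rewrite /local_oracle Hg' Hg'.
congr (g _ a a'); apply/setP=> u; rewrite !inE.
case: (boolP (adj v u)) => H /=; last by rewrite andbF.
by rewrite HL // andbT.
Qed.

Lemma step_eq s k l v t : Good k s -> Intm s k (v::l) t ->
  a_step A (s v) (inbox adj id s v) =
  if col v == k then [seq (pb.1, (li v, k.+1, Some pb.2)) | pb <- dec (aX t v) (bY t v)]
  else [:: (1, (li v, k.+1, (s v).2))].
Proof.
move=> HG HI. have [E1 E2] := HG v.
have Htv : t v = s v by apply: (HI v).1; rewrite mem_head.
have Esv : s v = (li v, k, (s v).2) by rewrite -E1; case: (s v).
rewrite {1}Esv /= eq_sym; case: (eqVneq (col v) k) => Hk //.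
have Hsv : (s v).2 = None by apply/eqP; rewrite E2 Hk.
have Hnb : forall u, adj v u -> (t u).2 = (s u).2.
  move=> u Hvu; have [H1 H2] := HI u.
  case: (boolP (u \in v :: l)) => Hu; first by rewrite H1.
  have [_ [H3 _]] := H2 Hu. apply: H3; rewrite -Hk; have := (proj2 Hcol) v u Hvu; by rewrite eq_sym.
have HvX : v \notin Xs t by rewrite inE Htv Hsv.
have HvY : v \in Ys t by rewrite inE Htv Hsv.
rewrite (@oracle_eq v _ (Xs t)); last first.
  by move=> u Hvu; rewrite inbox_nbr //= inE Hnb.
rewrite (@oracle_eq v _ (Ys t)); last first.
  by move=> u Hvu; rewrite inbox_nbr //= inE Hnb.
rewrite /aX /bY /setv (setD1_id HvX) (setU1_id HvY) //.
Qed.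
Arguments step_eq {s k l v t}.

Lemma Xs_upd (t : cfg) v x : Xs (update t v x) = setv (Xs t) v (x.2 == Some true).
Proof.
apply/setP=> u; rewrite /setv /update; case: (eqVneq u v) => [->|Huv].
- case E: (x.2 == Some true); rewrite !inE ?eqxx /= ?E //.
- case: (x.2 == Some true); rewrite !inE (negbTE Huv) //.
Qed.

Lemma Ys_upd (t : cfg) v x : Ys (update t v x) = setv (Ys t) v (x.2 != Some false).
Proof.
apply/setP=> u; rewrite /setv /update; case: (eqVneq u v) => [->|Huv].
- case E: (x.2 != Some false); rewrite !inE ?eqxx /= ?E //.
- case: (x.2 != Some false); rewrite !inE (negbTE Huv) //.
Qed.

Lemma XsYs (t : cfg) : Xs t \subset Ys t.
Proof. apply/subsetP=> u; rewrite !inE => /eqP ->. by []. Qed.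

Lemma Intm_upd s k l v t x : uniq (v::l) -> Intm s k (v::l) t ->
  x.1 = (li v, k.+1) -> (col v != k -> x.2 = (s v).2) -> (col v == k -> x.2 != None) ->
  Intm s k l (update t v x).
Proof.
move=> Hu HI Hx1 Hx2 Hx3 u; rewrite /update; case: (eqVneq u v) => [->|Huv].
- have Hvl : v \notin l by case/andP: Hu.
  by rewrite (negbTE Hvl).
- have [H1 H2] := HI u. rewrite inE (negbTE Huv) /= in H1 H2. by split.
Qed.
Arguments Intm_upd {s k l v t x}.

Lemma Good_fin s k t : Good k s -> Intm s k [::] t -> Good k.+1 t.
Proof.
move=> HG HI u; have [_ H] := HI u; have [H1 [H2 H3]] := H isT.
split=> //. have [_ E2] := HG u. case: (eqVneq (col u) k) => Hk.
- rewrite Hk ltnn. apply/negbTE. exact: H3 (introT eqP Hk).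
- rewrite H2 // E2. by rewrite leq_eqVlt eq_sym (negbTE Hk).
Qed.
Arguments Good_fin {s k t}.

Lemma step_out s k l v t w x : Good k s -> Intm s k (v::l) t ->
  List.In (w, x) (a_step A (s v) (inbox adj id s v)) ->
  (x.1 = (li v, k.+1)) /\ (col v != k -> (x.2 = (s v).2) /\ (w = 1)) /\ (col v == k -> exists bb, (x.2 = Some bb) /\ List.In (w, bb) (dec (aX t v) (bY t v))).
Proof.
move=> HG HI; rewrite (step_eq HG HI); case: (eqVneq (col v) k) => Hk /=.
- move=> Hin; case: (In_map _ _ _ Hin) => [[w' bb] [Hin' [-> ->]]] /=.
  split=> //; split=> // _; by exists bb.
- by case=> // [[<- <-]].
Qed.
Arguments step_out {s k l v t w x}.

Definition rstep (s : cfg) (v : V) (D : seq (R * cfg)) : seq (R * cfg) :=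
  bindf D (fun _ => a_step A (s v) (inbox adj id s v)) (fun t x => update t v x).

Lemma round_eq s : round adj id s = foldl (fun D v => rstep s v D) [:: (1, s)] (enum V).
Proof. by []. Qed.

Hypothesis Hdec : forall a b w bb, List.In (w, bb) (dec a b) -> 0 <= w.

Lemma round_supp s k (Q : cfg -> Prop) : Good k s ->
  (forall l v t w x, uniq (v::l) -> Intm s k (v::l) t -> Q t ->
     List.In (w, x) (a_step A (s v) (inbox adj id s v)) -> Q (update t v x)) ->
  Q s -> supp (round adj id s) (fun w t => 0 <= w /\ Good k.+1 t /\ Q t).
Proof.
move=> HG HQ Qs; rewrite round_eq => w t Hin.
pose I := (fun (l : seq V) (w : R) (t : cfg) => 0 <= w /\ Intm s k l t /\ Q t).
have Hstep : forall v l D, uniq (v::l) -> supp D (I (v::l)) -> supp (rstep s v D) (I l).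
  move=> v l D Hu HD; apply: supp_bindf HD _ => w0 t0 [H0 [HI HQt]] w' x Hx.
  have [Hx1 [Hx2 Hx3]] := step_out HG HI Hx.
  split; [|split].
  + apply: mulr_ge0 => //. case: (eqVneq (col v) k) => Hk.
    * have [bb [_ Hb]] := Hx3 (introT eqP Hk). exact: Hdec Hb.
    * by rewrite (proj2 (Hx2 Hk)).
  + apply: Intm_upd Hu HI Hx1 _ _.
    * by move=> Hk; case: (Hx2 Hk).
    * by move=> Hk; have [bb [-> _]] := Hx3 Hk.
  + exact: HQ Hu HI HQt Hx.
have Hinit : supp [:: (1, s)] (I (enum V)).
  move=> w0 t0 [] // [<- <-]; split=> //; split=> // u; split=> //.
  by rewrite mem_enum.
have [H1 [H2 H3]] := foldl_inv (fun D v => rstep s v D) I Hstep (enum V) [:: (1, s)] (enum_uniq _) Hinit w t Hin.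
split=> //; split=> //; exact: Good_fin H2.
Qed.

Lemma round_Ex s k h : Good k s ->
  (forall l v t, uniq (v::l) -> Intm s k (v::l) t ->
     h t <= \sum_(px <- a_step A (s v) (inbox adj id s v)) px.1 * h (update t v px.2)) ->
  h s <= Ex (round adj id s) h.
Proof.
move=> HG Hh; rewrite round_eq.
pose I := (fun (l : seq V) (w : R) (t : cfg) => 0 <= w /\ Intm s k l t).
have Hstep : forall v l D, uniq (v::l) -> supp D (I (v::l)) -> supp (rstep s v D) (I l).
  move=> v l D Hu HD; apply: supp_bindf HD _ => w0 t0 [H0 HI] w' x Hx.
  have [Hx1 [Hx2 Hx3]] := step_out HG HI Hx.
  split.
  + apply: mulr_ge0 => //. case: (eqVneq (col v) k) => Hk.
    * have [bb [_ Hb]] := Hx3 (introT eqP Hk). exact: Hdec Hb.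
    * by rewrite (proj2 (Hx2 Hk)).
  + apply: Intm_upd Hu HI Hx1 _ _.
    * by move=> Hk; case: (Hx2 Hk).
    * by move=> Hk; have [bb [-> _]] := Hx3 Hk.
have HE : forall v l D, uniq (v::l) -> supp D (I (v::l)) -> Ex D h <= Ex (rstep s v D) h.
  move=> v l D Hu HD; apply: Ex_bind_ge => w0 t0 /HD [H0 HI]; split=> //.
  exact: (Hh l v t0 Hu HI).
have Hinit : supp [:: (1, s)] (I (enum V)).
  move=> w0 t0 [] // [<- <-]; split=> // u; split=> //.
  by rewrite mem_enum.
have := foldl_Ex (fun D v => rstep s v D) I h Hstep HE (enum V) [:: (1, s)] (enum_uniq _) Hinit.
by rewrite /Ex big_cons big_nil mul1r addr0.
Qed.

Lemma Good_init : Good 0 (init_config adj id c col f A).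
Proof. by move=> u; split. Qed.

Lemma run_supp (Q : nat -> cfg -> Prop) :
  Q 0%N (init_config adj id c col f A) ->
  (forall k s, (k < c)%N -> Good k s -> Q k s ->
     supp (round adj id s) (fun w t => 0 <= w /\ Good k.+1 t /\ Q k.+1 t)) ->
  forall k, (k <= c)%N -> supp (run adj id c col f A k) (fun w t => 0 <= w /\ Good k t /\ Q k t).
Proof.
move=> Q0 HR; elim=> [|k IH] Hk.
- move=> w t [] // [<- <-]; split=> //; split=> //; exact: Good_init.
- change (supp (bindf (run adj id c col f A k) (@round R V adj id A) (fun _ x => x))
            (fun w t => 0 <= w /\ Good k.+1 t /\ Q k.+1 t)).
  apply: supp_bindf (IH (ltnW Hk)) _ => w t [H0 [HG HQ]] w' x Hx.
  have [H1 H2] := HR k t Hk HG HQ w' x Hx. split=> //; exact: mulr_ge0.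
Qed.

Lemma run_Ex h :
  (forall k s, (k < c)%N -> Good k s -> h s <= Ex (round adj id s) h) ->
  forall k, (k <= c)%N -> h (init_config adj id c col f A) <= Ex (run adj id c col f A k) h.
Proof.
move=> HR; elim=> [|k IH] Hk.
- by rewrite /Ex /= big_cons big_nil mul1r addr0.
- apply: le_trans (IH (ltnW Hk)) _.
  change (Ex (run adj id c col f A k) h <=
          Ex (bindf (run adj id c col f A k) (@round R V adj id A) (fun _ x => x)) h).
  apply: Ex_bind_ge => w t Hin.
  have [H0 [HG _]] := @run_supp (fun _ _ => True) I
     (fun k s Hk HG _ => @round_supp s k (fun _ => True) HG (fun _ _ _ _ _ _ _ _ _ => I) I)
     k (ltnW Hk) w t Hin.
  split=> //. exact (HR k t Hk HG).
Qed.

Definition PotC (kk : R) (O : {set V}) (t : cfg) := Pot f kk O (Xs t) (Ys t).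

Lemma PotC_same kk O (t : cfg) v x : x.2 = (t v).2 -> PotC kk O (update t v x) = PotC kk O t.
Proof.
move=> Hx; rewrite /PotC; have -> : Xs (update t v x) = Xs t.
  apply/setP=> u; rewrite !inE /update; case: (eqVneq u v) => [->|] //; by rewrite Hx.
have -> // : Ys (update t v x) = Ys t.
  apply/setP=> u; rewrite !inE /update; case: (eqVneq u v) => [->|] //; by rewrite Hx.
Qed.

Lemma PotC_some kk O (t : cfg) v x bb : x.2 = Some bb ->
  PotC kk O (update t v x) = Pot f kk O (setv (Xs t) v bb) (setv (Ys t) v bb).
Proof. move=> Hx; rewrite /PotC Xs_upd Ys_upd Hx; by case: bb Hx. Qed.
Arguments PotC_some {kk O t v x bb}.

Lemma vfree s k l v t : Good k s -> Intm s k (v::l) t -> col v == k ->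
  v \notin Xs t /\ v \in Ys t.
Proof.
move=> HG HI /eqP Hk. have Htv : t v = s v by apply: (HI v).1; rewrite mem_head.
have [_ E2] := HG v. have Hsv : (s v).2 = None by apply/eqP; rewrite E2 Hk.
by rewrite !inE Htv Hsv.
Qed.
Arguments vfree {s k l v t}.

Lemma Htv s k l v t : Intm s k (v::l) t -> t v = s v.
Proof. move=> HI; apply: (HI v).1; by rewrite mem_head. Qed.
Arguments Htv {s k l v t}.

Lemma allD {T : Type} {D : seq (R * T)} {P : R -> T -> Prop} {p : pred (R * T)} :
  supp D P -> (forall w t, P w t -> p (w, t)) -> all p D.
Proof.
elim: D => [|[w t] D IH] //= HD Hp. rewrite Hp ?IH //; first by move=> w0 t0 H; apply: HD; right.
apply: HD; by left.
Qed.

Lemma fin_pot kk O s : Good c s -> PotC kk O s = (2 + kk) * f (output s).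
Proof.
move=> HG. have EXY : Ys s = Xs s.
  apply/setP=> u; rewrite !inE. have [_ E2] := HG u.
  have Hc := (proj1 Hcol) u. rewrite leqNgt Hc /= in E2.
  by case: ((s u).2) E2 => // [[]].
rewrite /PotC /Pot EXY.
have -> : (O :|: Xs s) :&: Xs s = Xs s.
  by apply/setP=> u; rewrite in_setI in_setU; case: (u \in Xs s); rewrite ?orbT ?andbF.
have -> : output s = Xs s by [].
ring.
Qed.
Lemma init_pot kk O : PotC kk O (init_config adj id c col f A) = f set0 + f setT + kk * f O.
Proof.
rewrite /PotC /Pot.
have -> : Xs (init_config adj id c col f A) = set0 by apply/setP=> u; rewrite !inE.
have -> : Ys (init_config adj id c col f A) = setT by apply/setP=> u; rewrite !inE.
by rewrite setU0 setIT.
Qed.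

Lemma supp_run_c : supp (run adj id c col f A c) (fun w t => 0 <= w /\ Good c t /\ True).
Proof.
exact: (@run_supp (fun _ _ => True) I
  (fun k s Hk HG _ => @round_supp s k (fun _ => True) HG (fun _ _ _ _ _ _ _ _ _ => I) I) c (leqnn c)).
Qed.

Lemma fmax_le (b : R) : 0 <= b -> (forall Y, f Y <= b) -> fmax f <= b.
Proof.
move=> H0 H; rewrite /fmax; elim/big_ind: _ => // x y Hx Hy.
by rewrite ge_max Hx Hy.
Qed.

Lemma rand_final : nonneg f ->
  (forall (O X Y : {set V}) (v : V), X \subset Y -> v \notin X -> v \in Y ->
     Pot f 2 O X Y <= \sum_(pb <- dec (f (v |: X) - f X) (f (Y :\ v) - f Y))
                        pb.1 * Pot f 2 O (setv X v pb.2) (setv Y v pb.2)) ->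
  fmax f / 2%:R <= expected_value adj id c col f A.
Proof.
move=> Hnn HR.
have Hrun : forall O, PotC 2 O (init_config adj id c col f A) <= Ex (run adj id c col f A c) (PotC 2 O).
  move=> O; apply: run_Ex (leqnn c) => k s Hk HG. apply: (@round_Ex s k _ HG) => l v t Hu HI.
  rewrite (step_eq HG HI). case: (eqVneq (col v) k) => Hk'.
  - rewrite big_map. have [HvX HvY] := vfree HG HI (introT eqP Hk').
    under eq_bigr => pb _ do rewrite (@PotC_some 2 O t v (li v, k.+1, Some pb.2) pb.2 erefl).
    exact: (HR O (Xs t) (Ys t) v (XsYs t) HvX HvY).
  - by rewrite big_cons big_nil addr0 mul1r PotC_same //= (Htv HI).
have HE : forall O, 2 * f O <= 4 * expected_value adj id c col f A.
  move=> O. have H1 := Hrun O. rewrite init_pot in H1.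
  have H2 : Ex (run adj id c col f A c) (PotC 2 O) <=
            Ex (run adj id c col f A c) (fun t => 4 * f (output t)).
    apply: Ex_le => w t /supp_run_c [H0 [HG _]]; split=> //.
    rewrite fin_pot //. lra.
  have H3 : Ex (run adj id c col f A c) (fun t => 4 * f (output t)) =
            4 * expected_value adj id c col f A.
    by rewrite /Ex /expected_value mulr_sumr; apply: eq_bigr => wt _; rewrite mulrCA.
  have := Hnn set0; have := Hnn setT. lra.
rewrite ler_pdivrMr ?ltr0Sn //. apply: fmax_le.
- have := HE set0; have := Hnn set0. lra.
- move=> Y; have := HE Y; lra.
Qed.

Lemma det_final : nonneg f ->
  (forall (O X Y : {set V}) (v : V), X \subset Y -> v \notin X -> v \in Y -> forall w bb,
     List.In (w, bb) (dec (f (v |: X) - f X) (f (Y :\ v) - f Y)) ->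
     Pot f 1 O X Y <= Pot f 1 O (setv X v bb) (setv Y v bb)) ->
  all (fun wt => fmax f / 3%:R <= f (output wt.2))
      (run adj id c col f A (nrounds V c A)).
Proof.
move=> Hnn HD.
pose Q := fun (k : nat) (t : cfg) => forall O, f O <= PotC 1 O t.
have Q0 : Q 0%N (init_config adj id c col f A).
  move=> O; rewrite init_pot; have := Hnn set0; have := Hnn setT. lra.
have QR : forall k s, (k < c)%N -> Good k s -> Q k s ->
     supp (round adj id s) (fun w t => 0 <= w /\ Good k.+1 t /\ Q k.+1 t).
  move=> k s Hk HG HQ. apply: (@round_supp s k (Q k) HG) => // l v t w x Hu HI Qt Hx O.
  apply: le_trans (Qt O) _.
  have [Hx1 [Hx2 Hx3]] := step_out HG HI Hx.
  case: (eqVneq (col v) k) => Hk'.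
  + have [bb [Hb Hin]] := Hx3 (introT eqP Hk'). rewrite (PotC_some Hb).
    have [HvX HvY] := vfree HG HI (introT eqP Hk').
    exact: (HD O (Xs t) (Ys t) v (XsYs t) HvX HvY w bb Hin).
  + rewrite PotC_same // (proj1 (Hx2 Hk')) (Htv HI) //.
have HS := @run_supp Q Q0 QR c (leqnn c).
change (nrounds V c A) with c.
apply: (allD HS) => w t [H0 [HG HQ]].
rewrite /= ler_pdivrMr ?ltr0Sn //. apply: fmax_le.
+ have := HQ set0; rewrite fin_pot //; have := Hnn (output t). lra.
+ move=> Y; have := HQ Y; rewrite fin_pot //. lra.
Qed.
Lemma congest_ok : congest adj id c col f A 2.
Proof.
move=> k _. apply: (@allD _ _ (fun _ _ => True)); first by move=> w t _.
move=> w t _.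
apply/forallP=> v; apply/forallP=> u; apply/implyP=> _ /=.
by rewrite leq_pmulr.
Qed.
End Model.

Lemma rdec_nonneg (R : realFieldType) (a b w : R) bb : List.In (w, bb) (rdec a b) -> 0 <= w.
Proof.
rewrite /rdec; case: ifP => Ha; first by case=> // [[<- _]].
case: ifP => Hb; first by case=> // [[<- _]].
move/negbT: Ha; rewrite -ltNge => Ha. move/negbT: Hb; rewrite -ltNge => Hb.
have Hs : 0 < a + b by rewrite addr_gt0.
case=> [[<- _]|[[<- _]|]] //; apply: divr_ge0; rewrite ?ltW //.
Qed.

Lemma ddec_nonneg (R : realFieldType) (a b w : R) bb : List.In (w, bb) (ddec a b) -> 0 <= w.
Proof. by case=> // [[<- _]]. Qed.

Lemma rvalid (R : realFieldType) : alg_valid (mkAlg (@rdec R)).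
Proof.
move=> [[li k] st] m /=. case: ifP => _; last by rewrite /= big_cons big_nil addr0 eqxx andbT andbT; exact: ler01.
rewrite all_map big_map /=.
set a := li_g li _ true false; set b := li_g li _ false true.
rewrite /rdec; case: ifP => Ha; first by rewrite big_cons big_nil addr0 /= ler01 eqxx.
case: ifP => Hb; first by rewrite big_cons big_nil addr0 /= ler01 eqxx.
move/negbT: Ha; rewrite -ltNge => Ha. move/negbT: Hb; rewrite -ltNge => Hb.
have Hs : 0 < a + b by rewrite addr_gt0.
rewrite /= !big_cons big_nil addr0 !divr_ge0 ?ltW //=.
by rewrite -mulrDl divff // gt_eqF.
Qed.

Lemma ddet (R : realFieldType) : alg_det (mkAlg (@ddec R)).
Proof.
move=> [[li k] st] m /=. case: ifP => _; by eexists.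
Qed.

Theorem mainTheorem7 (R : realFieldType) :
  (exists (C B : nat) (A : Alg R), alg_valid A /\
    forall (V : finType) (adj : rel V) (id : V -> nat) (c : nat) (col : V -> nat)
           (f : {set V} -> R),
      simple_graph adj -> ids_ok id -> legal_coloring adj c col ->
      nonneg f -> submodular f -> local_utility adj f ->
      [/\ (nrounds V c A <= C * c)%N,
          congest adj id c col f A B &
          fmax f / 2%:R <= expected_value adj id c col f A])
  /\
  (exists (C B : nat) (A : Alg R), alg_det A /\
    forall (V : finType) (adj : rel V) (id : V -> nat) (c : nat) (col : V -> nat)
           (f : {set V} -> R),
      simple_graph adj -> ids_ok id -> legal_coloring adj c col ->
      nonneg f -> submodular f -> local_utility adj f ->
      [/\ (nrounds V c A <= C * c)%N,
          congest adj id c col f A B &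
          all (fun wt => fmax f / 3%:R <= f (output wt.2))
              (run adj id c col f A (nrounds V c A))]).
Proof.
split.
- exists 1%N, 2%N, (mkAlg (@rdec R)); split; first exact: rvalid.
  move=> V adj id c col f Hg Hid Hcol Hnn Hsub Hloc; split.
  + by rewrite mul1n.
  + exact: congest_ok.
  + eapply rand_final; eauto.
    * exact: rdec_nonneg.
    * move=> O X Y v HXY HvX HvY. exact: rand_step.
- exists 1%N, 2%N, (mkAlg (@ddec R)); split; first exact: ddet.
  move=> V adj id c col f Hg Hid Hcol Hnn Hsub Hloc; split.
  + by rewrite mul1n.
  + exact: congest_ok.
  + eapply det_final; eauto.
    * exact: ddec_nonneg.
    * move=> O X Y v HXY HvX HvY w bb [] // [_ <-]. exact: det_step.
Qed.
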